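(* Let $m\ge 3$ and $H=\Theta(l_1,\ldots,l_m)$ with $l_1=\cdots=l_m=4$, and let $G=H^2$. Then $G$ is equitably $(m+2)$-choosable.
   Context: $\Theta(l_1,\ldots,l_m)$ denotes the graph consisting of two vertices $u,w$ joined by $m$ internally disjoint paths of lengths $l_1,\ldots,l_m$. For a graph $H$, $H^2$ has vertex set $V(H)$ with two vertices adjacent iff their distance in $H$ is 1 or 2. A $k$-assignment $L$ assigns to each vertex a set of exactly $k$ colors; an equitable $L$-coloring of $G$ is a proper coloring $f$ with $f(v)\in L(v)$ such that no color is used more than $\lceil |V(G)|/k\rceil$ times; $G$ is equitably $k$-choosable if it has an equitable $L$-coloring for every $k$-assignment $L$. *)

(* Defs.v *)
From mathcomp Require Import all_boot.
Set Implicit Arguments. Unset Strict Implicit. Unset Printing Implicit Defensive.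

(* Vertices of Theta(l_1,...,l_m): the two poles  u := inl false,  w := inl true,
   and for each path i the internal vertices (i, j), j = 0 .. l_i - 2,
   listed in order from u to w. *)
Definition theta_vertex (m : nat) (l : 'I_m -> nat) : finType :=
  (bool + {i : 'I_m & 'I_(l i).-1})%type.

Definition theta_edge (m : nat) (l : 'I_m -> nat)
    (x y : theta_vertex l) : bool :=
  match x, y with
  | inl false, inr (existT _ j) => val j == 0
  | inr (existT i j), inr (existT i' j') => (i == i') && ((val j).+1 == val j')
  | inr (existT i j), inl true => val j == (l i).-2
  | inl false, inl true => [exists i, l i == 1]
  | _, _ => false
  end.

Definition theta_adj (m : nat) (l : 'I_m -> nat) : rel (theta_vertex l) :=
  fun x y => theta_edge x y || theta_edge y x.

Definition sq_adj (V : finType) (adj : rel V) : rel V :=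
  fun x y => (x != y) && (adj x y || [exists z, adj x z && adj z y]).

Definition k_assignment (V : finType) (k : nat) (L : V -> seq nat) : Prop :=
  forall v, uniq (L v) /\ size (L v) = k.

Definition equitable_L_coloring (V : finType) (adj : rel V) (k : nat)
    (L : V -> seq nat) (f : V -> nat) : Prop :=
  [/\ forall v, f v \in L v,
      forall x y, adj x y -> f x != f y &
      forall c, #|[pred v | f v == c]| <= (#|V| + k.-1) %/ k].

Definition equitably_choosable (V : finType) (adj : rel V) (k : nat) : Prop :=
  forall L : V -> seq nat, k_assignment k L ->
    exists f : V -> nat, equitable_L_coloring adj k L f.

(* Main.v *)
Require Import Defs.
From mathcomp Require Import all_boot zify.
Set Implicit Arguments. Unset Strict Implicit. Unset Printing Implicit Defensive.

Lemma exists_notin (l l' : seq nat) : uniq l -> size l' < size l -> exists2 c, c \in l & c \notin l'.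
Proof.
move=> ul hs; case: (boolP (has (fun c => c \notin l') l)) => [/hasP[c cl cl']|/hasPn H].
  by exists c.
have : size l <= size l' by apply: uniq_leq_size => // c /H; rewrite negbK.
by rewrite leqNgt hs.
Qed.

Lemma clique0 (I : eqType) (M : I -> seq nat) (s : seq I) :
  uniq s -> (forall x, x \in s -> uniq (M x)) ->
  (forall x, x \in s -> index x s < size (M x)) ->
  exists g : I -> nat, (forall x, x \in s -> g x \in M x) /\
     (forall x y, x \in s -> y \in s -> x != y -> g x != g y).
Proof.
elim/last_ind: s => [|s x IH].
  by move=> _ _ _; exists (fun _ => 0); split.
rewrite rcons_uniq => /andP[xs us] uM hi.
have [y Hy|y Hy|g [g1 g2]] := IH us.
- by apply: uM; rewrite mem_rcons in_cons Hy orbT.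
- by have := hi y; rewrite mem_rcons in_cons Hy orbT -cats1 index_cat Hy; apply.
- have [||c cM cg] := @exists_notin (M x) [seq g y | y <- s].
  + by apply: uM; rewrite mem_rcons mem_head.
  + rewrite size_map; have := hi x; rewrite mem_rcons mem_head -cats1 index_cat (negbTE xs) /= eqxx addn0; by apply.
  exists (fun y => if y == x then c else g y); split.
  + move=> y; rewrite mem_rcons in_cons; case: eqP => [->|_] //= /g1 //.
  + move=> y1 y2; rewrite !mem_rcons !in_cons.
    case: (eqVneq y1 x) => [->|n1]; case: (eqVneq y2 x) => [->|n2] //=.
    * move=> _ h2 _; apply/eqP=> e; move/negP: cg; apply; rewrite e; exact: map_f.
    * move=> h1 _ _; apply/eqP=> e; move/negP: cg; apply; rewrite -e; exact: map_f.
    * by move=> h1 h2; apply: g2.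
Qed.

Lemma clique (I : eqType) (M : I -> seq nat) (s : seq I) (z : I) :
  uniq s -> z \in s -> (forall x, x \in s -> uniq (M x)) ->
  (forall x, x \in s -> size s <= size (M x) + (x != z)) ->
  exists g : I -> nat, (forall x, x \in s -> g x \in M x) /\
     (forall x y, x \in s -> y \in s -> x != y -> g x != g y).
Proof.
move=> us zs uM hM.
have pe : perm_eq s (rcons (rem z s) z) by rewrite perm_sym perm_rcons perm_sym perm_to_rem.
have zr : z \notin rem z s by rewrite mem_rem_uniqF.
have sr : size (rem z s) = (size s).-1 by rewrite size_rem.
have [|||g [g1 g2]] := @clique0 I M (rcons (rem z s) z).
- by rewrite -(perm_uniq pe).
- by move=> x; rewrite -(perm_mem pe); apply: uM.
- move=> x; rewrite -(perm_mem pe) => xs.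
  rewrite -cats1 index_cat.
  case: ifP => xr.
  + have xz : x != z by apply: contraNneq zr => e; move: xr; rewrite e.
    have := hM x xs; rewrite xz addn1 => h.
    have := index_mem x (rem z s); rewrite xr sr => h2. lia.
  + have xz : x = z.
      apply/eqP; apply: contraFT xr => xz.
      by rewrite (mem_rem_uniq _ us) inE xz.
    subst x; have := hM z xs; rewrite eqxx addn0 /= eqxx sr => h.
    have : 0 < size s by case: (s) zs.
    lia.
- exists g; split.
  + by move=> x; rewrite (perm_mem pe); apply: g1.
  + by move=> x y; rewrite !(perm_mem pe); apply: g2.
Qed.

Lemma clique_all (I : eqType) (M : I -> seq nat) (s : seq I) :
  uniq s -> (forall x, x \in s -> uniq (M x)) ->
  (forall x, x \in s -> size s <= size (M x)) ->
  exists g : I -> nat, (forall x, x \in s -> g x \in M x) /\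
     (forall x y, x \in s -> y \in s -> x != y -> g x != g y).
Proof.
move=> us uM hM; apply: clique0 => // x xs.
by apply: leq_trans (hM x xs); rewrite index_mem.
Qed.

Lemma size_filter_notin (l F : seq nat) : uniq l ->
  size l <= size [seq c <- l | c \notin F] + size F.
Proof.
move=> ul; rewrite size_filter.
have h : count (fun c => c \in F) l <= size F.
  rewrite -size_filter; apply: uniq_leq_size; first exact: filter_uniq.
  by move=> c; rewrite mem_filter => /andP[].
rewrite -(count_predC (fun c => c \in F) l) addnC; apply: leq_add => //.
Qed.
Lemma in_rem_enum m (i j : 'I_m) : (j \in rem i (enum 'I_m)) = (j != i).
Proof. by rewrite (mem_rem_uniq _ (enum_uniq _)) inE mem_enum andbT. Qed.

Lemma size_rem_enum m (i : 'I_m) : size (rem i (enum 'I_m)) = m.-1.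
Proof. by rewrite size_rem ?mem_enum // size_enum_ord. Qed.

Lemma uniq_rem_enum m (i : 'I_m) : uniq (rem i (enum 'I_m)).
Proof. by apply: rem_uniq; apply: enum_uniq. Qed.

Lemma Klemma (m : nat) (S T : 'I_m -> seq nat) : 3 <= m ->
  (forall i, uniq (S i)) -> (forall i, uniq (T i)) ->
  (forall i, m <= size (S i)) -> (forall i, m <= size (T i)) ->
  exists ga gc : 'I_m -> nat,
   [/\ forall i, ga i \in S i, forall i, gc i \in T i,
       forall i j, i != j -> ga i != ga j,
       forall i j, i != j -> gc i != gc j & forall i, ga i != gc i].
Proof.
move=> m3 uS uT sS sT.
case: (boolP [exists i, exists j, (i != j) && has (fun c => c \in T j) (S i)]).
  case/existsP=> i /existsP[j /andP[ij /hasP[y yS yT]]].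
  have [||||ga' [ga1 ga2]] := @clique _ (fun k => [seq c <- S k | c \notin [:: y]])
         (rem i (enum 'I_m)) j.
  - exact: uniq_rem_enum.
  - by rewrite in_rem_enum eq_sym.
  - by move=> x _; apply: filter_uniq.
  - move=> x _; rewrite size_rem_enum.
    have := size_filter_notin [:: y] (uS x); have := sS x. simpl. lia.
  pose ga k := if k == i then y else ga' k.
  have [||||gc' [gc1 gc2]] := @clique _ (fun k => [seq c <- T k | c \notin undup [:: y; ga k]])
         (rem j (enum 'I_m)) i.
  - exact: uniq_rem_enum.
  - by rewrite in_rem_enum.
  - by move=> x _; apply: filter_uniq.
  - move=> x _; rewrite size_rem_enum.
    have := size_filter_notin (undup [:: y; ga x]) (uT x); have := sT x.
    case: (eqVneq x i) => [->|xi]; rewrite /ga ?eqxx /= ?inE ?eqxx /=.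
      lia.
    case: ifP => _ /=; lia.
  pose gc k := if k == j then y else gc' k.
  exists ga, gc; split.
  - move=> k; rewrite /ga; case: eqP => [->//|/eqP ki].
    by have := ga1 k; rewrite in_rem_enum ki mem_filter => /(_ isT) /andP[].
  - move=> k; rewrite /gc; case: eqP => [->//|/eqP kj].
    by have := gc1 k; rewrite in_rem_enum kj mem_filter => /(_ isT) /andP[].
  - move=> k l kl; rewrite /ga.
    case: (eqVneq k i) => [ki|ki]; case: (eqVneq l i) => [li|li].
    + by rewrite ki li eqxx in kl.
    + by have := ga1 l; rewrite in_rem_enum li mem_filter inE eq_sym => /(_ isT) /andP[].
    + by have := ga1 k; rewrite in_rem_enum ki mem_filter inE => /(_ isT) /andP[].
    + by apply: ga2; rewrite ?in_rem_enum.
  - move=> k l kl; rewrite /gc.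
    case: (eqVneq k j) => [kj|kj]; case: (eqVneq l j) => [lj|lj].
    + by rewrite kj lj eqxx in kl.
    + by have := gc1 l; rewrite in_rem_enum lj mem_filter mem_undup !inE eq_sym => /(_ isT) /andP[/norP[]].
    + by have := gc1 k; rewrite in_rem_enum kj mem_filter mem_undup !inE => /(_ isT) /andP[/norP[]].
    + by apply: gc2; rewrite ?in_rem_enum.
  - move=> k; rewrite /gc; case: (eqVneq k j) => [->|kj].
      have ji : j != i by rewrite eq_sym.
      rewrite /ga (negbTE ji).
      by have := ga1 j; rewrite in_rem_enum eq_sym ij mem_filter inE => /(_ isT) /andP[].
    have := gc1 k; rewrite in_rem_enum kj mem_filter mem_undup !inE => /(_ isT) /andP[/norP[_]]; by rewrite eq_sym.
rewrite negb_exists => /forallP hA.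
case: (boolP [exists i, has (fun c => c \notin T i) (S i)]).
  case/existsP=> i /hasP[y yS yT].
  have [|||ga' [ga1 ga2]] := @clique_all _ (fun k => [seq c <- S k | c \notin [:: y]])
         (rem i (enum 'I_m)).
  - exact: uniq_rem_enum.
  - by move=> x _; apply: filter_uniq.
  - move=> x _; rewrite size_rem_enum.
    have := size_filter_notin [:: y] (uS x); have := sS x. simpl. lia.
  pose ga k := if k == i then y else ga' k.
  have [||||gc [gc1 gc2]] := @clique _ (fun k => [seq c <- T k | c \notin [:: ga k]])
         (enum 'I_m) i.
  - exact: enum_uniq.
  - by rewrite mem_enum.
  - by move=> x _; apply: filter_uniq.
  - move=> x _; rewrite size_enum_ord.
    case: (eqVneq x i) => [->|xi].
      rewrite /ga eqxx addn0 (_ : [seq c <- T i | c \notin [:: y]] = T i) //.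
      apply/all_filterP/allP => c cT; rewrite inE; apply: contraNneq yT => <-//.
    have := size_filter_notin [:: ga x] (uT x); have := sT x. simpl. lia.
  exists ga, gc; split.
  - move=> k; rewrite /ga; case: eqP => [->//|/eqP ki].
    by have := ga1 k; rewrite in_rem_enum ki mem_filter => /(_ isT) /andP[].
  - by move=> k; have := gc1 k; rewrite mem_enum mem_filter => /(_ isT) /andP[].
  - move=> k l kl; rewrite /ga.
    case: (eqVneq k i) => [ki|ki]; case: (eqVneq l i) => [li|li].
    + by rewrite ki li eqxx in kl.
    + by have := ga1 l; rewrite in_rem_enum li mem_filter inE eq_sym => /(_ isT) /andP[].
    + by have := ga1 k; rewrite in_rem_enum ki mem_filter inE => /(_ isT) /andP[].
    + by apply: ga2; rewrite ?in_rem_enum.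
  - by move=> k l; apply: gc2; rewrite mem_enum.
  - by move=> k; have := gc1 k; rewrite mem_enum mem_filter inE eq_sym => /(_ isT) /andP[].
rewrite negb_exists => /forallP h1.
have sub i : {subset S i <= T i}.
  by move=> c cS; have := h1 i; move/hasPn/(_ c cS); rewrite negbK.
have dis i j c : i != j -> c \in S i -> c \in T j -> False.
  move=> ij cS cT; have := hA i; rewrite negb_exists => /forallP /(_ j).
  by rewrite ij /=; case/hasP; exists c.
have hz i : 1 < size (S i) by apply: leq_trans (sS i); apply: ltnW.
exists (fun i => nth 0 (S i) 0), (fun i => nth 0 (S i) 1); split.
- by move=> i; apply: mem_nth; apply: ltnW (hz i).
- by move=> i; apply: sub; apply: mem_nth; apply: hz.
- move=> i j ij; apply/eqP => e; apply: (dis i j (nth 0 (S i) 0) ij).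
    by apply: mem_nth; apply: ltnW (hz i).
  by rewrite e; apply: sub; apply: mem_nth; apply: ltnW (hz j).
- move=> i j ij; apply/eqP => e; apply: (dis i j (nth 0 (S i) 1) ij).
    by apply: mem_nth; apply: hz.
  by rewrite e; apply: sub; apply: mem_nth; apply: hz.
- by move=> i; rewrite (nth_uniq 0 (ltnW (hz i)) (hz i) (uS i)).
Qed.

Definition V m := theta_vertex (fun _ : 'I_m => 4).
Definition Gp m (x y : V m) : bool :=
 match x, y with
 | inl false, inr (existT _ j) => val j <= 1
 | inr (existT _ j), inl false => val j <= 1
 | inl true, inr (existT _ j) => 1 <= val j
 | inr (existT _ j), inl true => 1 <= val j
 | inr (existT i j), inr (existT i' j') =>
     if i == i' then val j != val j' else (val j == val j') && (val j != 1)
 | _, _ => false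
 end.
Ltac solv := repeat match goal with
 | H : is_true (_ || _) |- _ => case/orP: H => H
 | H : is_true (_ && _) |- _ => case/andP: H => H ?
 | H : is_true [exists _, _] |- _ => case/existsP: H => ? H
 | H : is_true (?a == ?b) |- _ => move/eqP: H => H; subst
 end; rewrite ?eqxx //=.
Lemma sq_Gp m (x y : V m) : sq_adj (@theta_adj m (fun _ => 4)) x y -> Gp x y.
Proof.
rewrite /sq_adj /theta_adj /=.
case/andP=> nxy /orP[].
- case: x nxy => [[]|[i [[|[|[|?]]] ?]]]; case: y => [[]|[i' [[|[|[|?]]] ?]]] //= nxy H;
   solv; case: eqP => //.
- case/existsP => z.
  case: x nxy => [[]|[i [[|[|[|?]]] ?]]]; case: y => [[]|[i' [[|[|[|?]]] ?]]] //= nxy;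
  case: z => [[]|[i'' [[|[|[|?]]] ?]]] //= H; solv; try case: eqP => //.
  all: (try move=> ?); subst; case/negP: nxy; apply/eqP;
     congr (inr (existT _ _ _)); by apply: val_inj.
Qed.

Lemma cardV m : #|V m| = 3 * m + 2.
Proof.
rewrite /V /theta_vertex card_sum card_bool card_tagged card_ord.
have h (s : seq 'I_m) : sumn [seq 3 | _ <- s] = 3 * size s.
  by elim: s => //= a s ->; rewrite mulnS.
by rewrite h size_enum_ord addnC.
Qed.

Theorem lemma3p8 (m : nat) (hm : 3 <= m) :
  equitably_choosable (sq_adj (@theta_adj m (fun _ => 4))) m.+2.
Proof.
move=> L hL.
pose j0 : 'I_3 := @Ordinal 3 0 isT.
pose j1 : 'I_3 := @Ordinal 3 1 isT.
pose j2 : 'I_3 := @Ordinal 3 2 isT.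
pose vu : V m := inl false. pose vw : V m := inl true.
pose vx (i : 'I_m) (j : 'I_3) : V m := inr (existT _ i j).
have uL v : uniq (L v) by case: (hL v).
have sL v : size (L v) = m.+2 by case: (hL v).
pose fu := nth 0 (L vu) 0. pose fw := nth 0 (L vw) 0.
have fuL : fu \in L vu by apply: mem_nth; rewrite sL.
have fwL : fw \in L vw by apply: mem_nth; rewrite sL.
have [|||gb [gb1 gb2]] := @clique_all _
   (fun i => [seq c <- L (vx i j1) | c \notin [:: fu; fw]]) (enum 'I_m).
- exact: enum_uniq.
- by move=> x _; apply: filter_uniq.
- move=> x _; rewrite size_enum_ord.
  have := size_filter_notin [:: fu; fw] (uL (vx x j1)); rewrite sL /= => h; by rewrite -(leq_add2r 2) addn2.
pose S i := [seq c <- L (vx i j0) | c \notin [:: fu; gb i]].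
pose T i := [seq c <- L (vx i j2) | c \notin [:: fw; gb i]].
have [||||ga [gc [ga1 gc1 ga2 gc2 gac]]] := @Klemma m S T hm.
- by move=> i; apply: filter_uniq.
- by move=> i; apply: filter_uniq.
- move=> i; have := size_filter_notin [:: fu; gb i] (uL (vx i j0)); rewrite sL /= => h; by rewrite -(leq_add2r 2) addn2.
- move=> i; have := size_filter_notin [:: fw; gb i] (uL (vx i j2)); rewrite sL /= => h; by rewrite -(leq_add2r 2) addn2.
have gbf i : [&& gb i != fu, gb i != fw & gb i \in L (vx i j1)].
  by have := gb1 i; rewrite mem_enum mem_filter !inE negb_or -andbA; apply.
have gaf i : [&& ga i != fu, ga i != gb i & ga i \in L (vx i j0)].
  by have := ga1 i; rewrite mem_filter !inE negb_or -andbA.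
have gcf i : [&& gc i != fw, gc i != gb i & gc i \in L (vx i j2)].
  by have := gc1 i; rewrite mem_filter !inE negb_or -andbA.
pose f (v : V m) : nat := match v with
  | inl false => fu | inl true => fw
  | inr (existT i j) => if val j == 0 then ga i else if val j == 1 then gb i else gc i end.
have hau i : ga i != fu by case/and3P: (gaf i).
have hab i : ga i != gb i by case/and3P: (gaf i).
have hbu i : gb i != fu by case/and3P: (gbf i).
have hbw i : gb i != fw by case/and3P: (gbf i).
have hcw i : gc i != fw by case/and3P: (gcf i).
have hcb i : gc i != gb i by case/and3P: (gcf i).
have gb2' i j : i != j -> gb i != gb j by move=> ij; apply: gb2; rewrite ?mem_enum.
exists f; split.
- case=> [[]|[i [[|[|[|?]]] p]]] //=; rewrite (bool_irrelevance p (isT : 0 < 3)).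
  + by case/and3P: (gaf i).
  + by case/and3P: (gbf i).
  + by case/and3P: (gcf i).
- move=> x y /sq_Gp.
  case: x => [[]|[i [[|[|[|?]]] p]]]; case: y => [[]|[i' [[|[|[|?]]] p']]] //= H;
  try (case: (eqVneq i i') H => [<-|ne] //= H);
  first [ apply: hau | apply: hab | apply: hbu | apply: hbw | apply: hcw | apply: hcb
        | apply: gac | apply: ga2 | apply: gc2 | apply: gb2'
        | rewrite eq_sym; first [ apply: hau | apply: hab | apply: hbu | apply: hbw | apply: hcw | apply: hcb
        | apply: gac ] ]; exact: ne.
- move=> c.
pose phi (v : V m) : 'I_3 := match v with
  | inl false => j0 | inl true => j2 | inr (existT _ j) => j end.
have h3 : #|[pred v | f v == c]| <= 3.
  rewrite -[3](card_ord 3); apply: (@leq_card_in _ _ phi) => x y.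
  rewrite !inE => /eqP hx /eqP hy; rewrite -hy in hx; clear hy.
  case: x hx => [[]|[i [[|[|[|?]]] p]]]; case: y => [[]|[i' [[|[|[|?]]] p']]] //= hx /(congr1 val) //= _;
  try (case: (eqVneq i i') hx => [<-|ne] //= hx);
  try (congr (inr (existT _ _ _)); by apply: val_inj);
  exfalso; move/eqP: hx; apply/negP. 1-7: first [ apply: hau | apply: hab | apply: hbu | apply: hbw | apply: hcw | apply: hcb
        | apply: gac | apply: ga2 | apply: gc2 | apply: gb2'
        | rewrite eq_sym; first [ apply: hau | apply: hab | apply: hbu | apply: hbw | apply: hcw | apply: hcb
        | apply: gac ] ]; exact: ne.
rewrite cardV; apply: leq_trans h3 _; rewrite leq_divRL //; lia.
Qed.
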